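(* Let $\mathcal E$ be an exchangeability system for a noncommutative probability space $(\mathcal A,\phi)$, let $n\ge 1$ and $X_1,\dots,X_n\in\mathcal A$. Suppose there is a subset $I\subseteq[n]$ with $I\neq\emptyset$ and $I\neq[n]$ such that the families $(X_j)_{j\in I}$ and $(X_j)_{j\in[n]\setminus I}$ are $\mathcal E$-independent. Then $K_n(X_1,\dots,X_n)=0$.
   Context: A noncommutative probability space is a pair $(\mathcal A,\phi)$ of a complex unital algebra $\mathcal A$ and a unital linear functional $\phi$. An exchangeability system $\mathcal E$ for $(\mathcal A,\phi)$ consists of a noncommutative probability space $(\mathcal U,\tilde\phi)$ and a family $(\iota_k)_{k\in\mathbb N}$ of embeddings (injective unital algebra homomorphisms) $\iota_k:\mathcal A\to\mathcal A_k\subseteq\mathcal U$ with $\tilde\phi\circ\iota_k=\phi$; write $X^{(k)}=\iota_k(X)$. It is required that for all $X_1,\dots,X_n\in\mathcal A$, all indices $i_1,\dots,i_n\in\mathbb N$ and every bijection $\sigma$ of $\mathbb N$, $\tilde\phi(X_1^{(i_1)}\cdots X_n^{(i_n)})=\tilde\phi(X_1^{(\sigma(i_1))}\cdots X_n^{(\sigma(i_n))})$. Thus this value depends only on the kernel of $h:j\mapsto i_j$ (the partition of $[n]=\{1,\dots,n\}$ into the level sets of $h$); for a partition $\pi$ of $[n]$ this value is denoted $\phi_\pi(X_1,\dots,X_n)$. For a primitive $n$-th root of unity $\omega$ put $X_j^\omega=\sum_{k=1}^n\omega^kX_j^{(k)}$ and define the cumulant $K_n(X_1,\dots,X_n)=\frac1n\tilde\phi(X_1^\omega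 X_2^\omega\cdots X_n^\omega)$. Subalgebras $\mathcal B,\mathcal C\subseteq\mathcal A$ are $\mathcal E$-independent if for all $X_1,\dots,X_n\in\mathcal B\cup\mathcal C$ and every decomposition $[n]=I\sqcup J$ with $X_i\in\mathcal B$ for $i\in I$ and $X_i\in\mathcal C$ for $i\in J$, one has $\phi_\pi(X_1,\dots,X_n)=\phi_{\pi'}(X_1,\dots,X_n)$ whenever the partitions $\pi,\pi'$ of $[n]$ satisfy $\pi|_I=\pi'|_I$ and $\pi|_J=\pi'|_J$. Two families of elements of $\mathcal A$ are $\mathcal E$-independent if the subalgebras they generate are. *)

(* Defs.v *)
From HB Require Import structures.
From mathcomp Require Import all_boot all_order all_algebra.
From mathcomp Require Import reals.
From mathcomp Require Import complex.
Set Implicit Arguments. Unset Strict Implicit. Unset Printing Implicit Defensive.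
Import Order.TTheory GRing.Theory Num.Theory.
Local Open Scope ring_scope.

Section Defs.
Variable (R : realType).
Local Notation C := (R[i]).

Definition unital_functional (A : algType C) (phi : A -> C) : Prop :=
  (forall (a : C) (x y : A), phi (a *: x + y) = a * phi x + phi y) /\ phi 1 = 1.

Definition embedding (A U : algType C) (f : A -> U) : Prop :=
  [/\ forall (a : C) (x y : A), f (a *: x + y) = a *: f x + f y,
      forall x y : A, f (x * y) = f x * f y,
      f 1 = 1 & injective f].

Definition mixed_moment (A U : algType C) (phit : U -> C) (iota : nat -> A -> U)
  (m : nat) (X : 'I_m -> A) (h : 'I_m -> nat) : C :=
  phit (\prod_(j < m) iota (h j) (X j)).

Definition exch_system (A U : algType C) (phi : A -> C) (phit : U -> C)
  (iota : nat -> A -> U) : Prop :=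
  [/\ unital_functional phit,
      forall k, embedding (iota k),
      forall k (x : A), phit (iota k x) = phi x &
      forall m (X : 'I_m -> A) (h : 'I_m -> nat) (sigma : nat -> nat),
        bijective sigma ->
        mixed_moment phit iota X h = mixed_moment phit iota X (sigma \o h)].

Definition same_kernel_on (m : nat) (d : 'I_m -> bool) (b : bool)
  (h h' : 'I_m -> nat) : Prop :=
  forall j k, d j = b -> d k = b -> (h j = h k <-> h' j = h' k).

(* E-independence of two subsets (subalgebras) B, Cs of A.  phi_pi is phit
   evaluated at any index function h with kernel pi; so "pi|_I = pi'|_I and
   pi|_J = pi'|_J" is expressed via index functions h, h'. *)
Definition E_independent (A U : algType C) (phit : U -> C) (iota : nat -> A -> U)
  (B Cs : A -> Prop) : Prop :=
  forall m (X : 'I_m -> A) (d : 'I_m -> bool),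
    (forall j, if d j then B (X j) else Cs (X j)) ->
    forall h h' : 'I_m -> nat,
      same_kernel_on d true h h' -> same_kernel_on d false h h' ->
      mixed_moment phit iota X h = mixed_moment phit iota X h'.

Definition is_subalgebra (A : algType C) (S : A -> Prop) : Prop :=
  [/\ S 1, forall (a : C) x, S x -> S (a *: x),
      forall x y, S x -> S y -> S (x + y) &
      forall x y, S x -> S y -> S (x * y)].

Definition gen_subalg (A : algType C) (S : A -> Prop) : A -> Prop :=
  fun x => forall T : A -> Prop, is_subalgebra T -> (forall y, S y -> T y) -> T x.

Definition family_set (A : algType C) (n : nat) (X : 'I_n -> A) (I : {set 'I_n})
  : A -> Prop := fun x => exists2 j, j \in I & x = X j.

Definition E_independent_families (A U : algType C) (phit : U -> C)
  (iota : nat -> A -> U) (n : nat) (X : 'I_n -> A) (I J : {set 'I_n}) : Prop :=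
  E_independent phit iota (gen_subalg (family_set X I)) (gen_subalg (family_set X J)).

Definition X_omega (A U : algType C) (iota : nat -> A -> U) (n : nat) (w : C)
  (x : A) : U := \sum_(1 <= k < n.+1) (w ^+ k) *: iota k x.

Definition cumulant (A U : algType C) (phit : U -> C) (iota : nat -> A -> U)
  (n : nat) (w : C) (X : 'I_n -> A) : C :=
  n%:R^-1 * phit (\prod_(j < n) X_omega iota n w (X j)).

End Defs.

(* Main.v *)
Require Import Defs.
From HB Require Import structures.
From mathcomp Require Import all_boot all_order all_algebra.
From mathcomp Require Import reals complex.
Import Order.TTheory GRing.Theory Num.Theory.
Local Open Scope ring_scope.

Theorem proposition2p2 (R : realType) (A U : algType R[i])
  (phi : A -> R[i]) (phit : U -> R[i]) (iota : nat -> A -> U)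
  (hphi : unital_functional phi) (hE : exch_system phi phit iota)
  (n : nat) (hn : (1 <= n)%N) (w : R[i]) (hw : n.-primitive_root w)
  (X : 'I_n -> A) (I : {set 'I_n})
  (hI0 : I != set0) (hIT : I != setT)
  (hind : E_independent_families phit iota X I (~: I)) :
  cumulant phit iota w X = 0.
Proof.
case: hE => [[hlin h1] _ _ _].
have hadd : forall x y, phit (x + y) = phit x + phit y.
  by move=> x y; have := hlin 1 x y; rewrite scale1r mul1r.
have hsc : forall a x, phit (a *: x) = a * phit x.
  move=> a x; have := hlin a x 0; rewrite addr0 => ->.
  have h0 : phit 0 = 0.
    have := hadd 0 0; rewrite addr0 => e.
    by apply: (addrI (phit 0)); rewrite addr0 -e.
  by rewrite h0 addr0.
have h0 : phit 0 = 0 by rewrite -(scale0r 0) hsc mul0r.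
pose F (f : {ffun 'I_n -> 'I_n}) :=
  (\prod_(j < n) w ^+ (f j).+1) * phit (\prod_(j < n) iota (f j).+1 (X j)).
have step1 : phit (\prod_(j < n) X_omega iota n w (X j)) = \sum_f F f.
  have -> : \prod_(j < n) X_omega iota n w (X j) =
     \prod_(j < n) \sum_(k < n) (w ^+ k.+1 *: iota k.+1 (X j)).
    apply: eq_bigr => j _; rewrite /X_omega big_add1 /= big_mkord //.
  rewrite bigA_distr_bigA /=.
  rewrite (big_morph phit hadd h0); apply: eq_bigr => f _.
  by rewrite scaler_prod hsc.
pose g (f : {ffun 'I_n -> 'I_n}) : {ffun 'I_n -> 'I_n} :=
  [ffun j => if j \in I then ordS (f j) else f j].
have ginj : injective g.
  move=> f1 f2 /ffunP E; apply/ffunP => j; have := E j; rewrite !ffunE.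
  by case: (j \in I) => //; apply: ordS_inj.
have wn : w ^+ n = 1 by apply: prim_expr_order.
have step3 : forall f, F (g f) = w ^+ #|I| * F f.
  move=> f; rewrite /F.
  have -> : phit (\prod_(j < n) iota (g f j).+1 (X j)) =
            phit (\prod_(j < n) iota (f j).+1 (X j)).
    symmetry.
    have := hind n X (fun j => j \in I).
    rewrite /mixed_moment; apply.
    - move=> j; case: ifP => jI T _ HT; apply: HT; exists j => //.
      by rewrite inE jI.
    - move=> j k /= jI kI; rewrite !ffunE jI kI; split.
        by case=> /val_inj ->.
      move=> E; suff -> : f j = f k by []; apply: ordS_inj; apply: val_inj => /=; case: E => E; exact: E.
    - move=> j k /= jI kI; rewrite !ffunE jI kI; done.
  rewrite mulrA; congr (_ * _).
  have -> : \prod_(j < n) w ^+ (g f j).+1 =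
            \prod_(j < n) (w ^+ (f j).+1 * (if j \in I then w else 1)).
    apply: eq_bigr => j _; rewrite ffunE; case: ifP => _; last by rewrite mulr1.
    rewrite exprS /= expr_mod // exprS mulrC; done.
  by rewrite big_split /= -big_mkcond prodr_const mulrC.
have step2 : \sum_f F f = w ^+ #|I| * \sum_f F f.
  rewrite {1}(reindex_inj ginj) /= mulr_sumr; apply: eq_bigr => f _; exact: step3.
have wk : w ^+ #|I| != 1.
  have := eq_prim_root_expr hw #|I| 0; rewrite expr0 => ->.
  rewrite mod0n modn_small.
    by rewrite -lt0n card_gt0.
  have : (#|I| < #|[set: 'I_n]|)%N.
    by apply: proper_card; rewrite properT.
  by rewrite cardsT card_ord.
rewrite /cumulant step1.
have -> : \sum_f F f = 0.
  apply/eqP; move/eqP: step2; rewrite -subr_eq0 -{1}(mul1r (\sum_f F f)) -mulrBl.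
  by rewrite mulf_eq0 subr_eq0 eq_sym (negbTE wk).
by rewrite mulr0.
Qed.
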